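(* Let $y_1, \ldots, y_n \in \mathfrak m$ be a minimal system of generators of $\mathfrak m$ (so $R = k[[y_1,\ldots,y_n]]$). Then, after possibly reordering $y_1, \ldots, y_n$, there exist elements $x_1, \ldots, x_n \in R$ and $z_1, \ldots, z_n \in R$ such that for all $i = 1, \ldots, n$: (1) $v(x_i) = a_i$; (2) $z_i \in k[x_1, \ldots, x_{i-1}]$ (a polynomial in $x_1,\ldots,x_{i-1}$), with $z_1 = 0$; (3) $y_i = x_i + z_i$.
   Context: Let $k$ be a field and let $(R,\mathfrak m)$ be a complete local noetherian domain of dimension $1$ containing $k$ with $R/\mathfrak m = k$, with normalization $\overline R$ having residue field $k$, so $\overline R = k[[t]]$ and $R \subseteq k[[t]]$ is finite birational. Let $v$ be the $t$-adic valuation. For $A \subseteq k((t))$ let $v(A) = \{v(f): f\in A\setminus\{0\}\}$. The Herzog–Kunz sequence of $R$ is $v(\mathfrak m)\setminus v(\mathfrak m^2)$ listed increasingly as $a_1 < \cdots < a_n$ (with $n = \mathrm{edim}(R)$). For $y_i\in\mathfrak m$, $k[[y_1,\ldots,y_n]]$ is the image of $k[[Y_1,\ldots,Y_n]]\to k[[t]]$, $Y_i\mapsto y_i$. *)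

(* Defs.v *)
From mathcomp Require Import all_boot all_order all_algebra all_fingroup.
Set Implicit Arguments. Unset Strict Implicit. Unset Printing Implicit Defensive.
Import GRing.Theory.
Local Open Scope ring_scope.

Section PS.
Variable k : fieldType.

Definition ps := nat -> k.

Definition psC (c : k) : ps := fun m => if m == 0%N then c else 0.
Definition psadd (f g : ps) : ps := fun m => f m + g m.
Definition psscale (c : k) (f : ps) : ps := fun m => c * f m.
Definition psmul (f g : ps) : ps := fun m => \sum_(j < m.+1) f j * g (m - j)%N.
Definition psexp (f : ps) (e : nat) : ps := iter e (psmul f) (psC 1).

Definition psmon (n : nat) (x : 'I_n -> ps) (al : {ffun 'I_n -> nat}) : ps :=
  \big[psmul/psC 1]_(j < n) psexp (x j) (al j).

Definition has_val (f : ps) (m : nat) : Prop :=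
  f m != 0 /\ forall j, (j < m)%N -> f j = 0.

(* Image of sum_al c_al Y^al under k[[Y_1..Y_n]] -> k[[t]], Y_j |-> x_j,
   for x_j with zero constant term: its t^m coefficient only involves
   the monomials of total degree <= m. *)
Definition pssubst (n : nat) (x : 'I_n -> ps) (c : {ffun 'I_n -> nat} -> k) : ps :=
  fun m => \sum_(al : {ffun 'I_n -> 'I_m.+1} | (\sum_(j < n) val (al j) <= m)%N)
             c [ffun j => val (al j)] * psmon x [ffun j => val (al j)] m.

Definition in_psalg (n : nat) (x : 'I_n -> ps) (f : ps) : Prop :=
  exists c, f =1 pssubst x c.

(* f ∈ k[x_j : j < i] (polynomial in x_1, ..., x_i) *)
Definition in_polyalg (n : nat) (x : 'I_n -> ps) (i : nat) (f : ps) : Prop :=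
  exists s : seq (k * {ffun 'I_n -> nat}),
    (forall p, p \in s -> forall j : 'I_n, (i <= j)%N -> p.2 j = 0%N) /\
    f =1 \big[psadd/psC 0]_(p <- s) psscale p.1 (psmon x p.2).

Definition max_ideal (R : ps -> Prop) (f : ps) : Prop := R f /\ f 0%N = 0.

Definition max_ideal2 (R : ps -> Prop) (f : ps) : Prop :=
  exists N (a b : 'I_N -> ps),
    (forall j, max_ideal R (a j) /\ max_ideal R (b j)) /\
    f =1 \big[psadd/psC 0]_(j < N) psmul (a j) (b j).

Definition vset (A : ps -> Prop) (m : nat) : Prop := exists f, A f /\ has_val f m.

Definition HK (R : ps -> Prop) (m : nat) : Prop :=
  vset (max_ideal R) m /\ ~ vset (max_ideal2 R) m.

Definition generates_max (R : ps -> Prop) (n : nat) (P : pred 'I_n) (y : 'I_n -> ps) :=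
  forall f, max_ideal R f ->
    exists r : 'I_n -> ps, (forall i, R (r i)) /\
      f =1 \big[psadd/psC 0]_(i < n | P i) psmul (r i) (y i).

Definition min_gen_sys (R : ps -> Prop) (n : nat) (y : 'I_n -> ps) : Prop :=
  (forall i, max_ideal R (y i)) /\ generates_max R predT y /\
  forall j, ~ generates_max R (predC1 j) y.

Definition finite_over (R : ps -> Prop) : Prop :=
  exists N (e : 'I_N -> ps), forall f, exists r : 'I_N -> ps,
    (forall j, R (r j)) /\ f =1 \big[psadd/psC 0]_(j < N) psmul (r j) (e j).

(* Frac(R) = k((t)): every power series is a quotient of elements of R *)
Definition birational (R : ps -> Prop) : Prop :=
  forall f, exists g h, R g /\ R h /\ ~ (h =1 psC 0) /\ psmul f h =1 g.

End PS.

(* Main.v *)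
From HB Require Import structures.
From mathcomp Require Import all_boot all_order all_algebra all_fingroup.
From mathcomp Require Import boolp.
From mathcomp Require Import ring zify.
Require Import Defs.
Set Implicit Arguments. Unset Strict Implicit. Unset Printing Implicit Defensive.
Import GRing.Theory.
Local Open Scope ring_scope.


Section Ring.
Variable k : fieldType.
Definition PS := ps k.
HB.instance Definition _ := Choice.on PS.
Definition psopp (f : PS) : PS := fun m => - f m.
Lemma addA : associative (@psadd k).
Proof. by move=> f g h; apply: funext => m; rewrite /psadd addrA. Qed.
Lemma addC : commutative (@psadd k).
Proof. by move=> f g; apply: funext => m; rewrite /psadd addrC. Qed.
Lemma add0 : left_id (psC 0) (@psadd k).
Proof. by move=> f; apply: funext => m; rewrite /psadd /psC; case: eqP => _; rewrite add0r. Qed.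
Lemma addN : left_inverse (psC 0) psopp (@psadd k).
Proof. by move=> f; apply: funext => m; rewrite /psadd /psC /psopp addNr; case: eqP. Qed.
HB.instance Definition _ := GRing.isZmodule.Build PS addA addC add0 addN.

Local Notation pC c := (@psC k c : PS).
Definition T (m : nat) (f : PS) : {poly k} := \poly_(i < m.+1) f i.
Lemma coefT m f i : (i <= m)%N -> (T m f)`_i = f i.
Proof. by move=> h; rewrite /T coef_poly ltnS h. Qed.

Lemma psmulE (f g : PS) (p q : {poly k}) m :
  (forall i, (i <= m)%N -> p`_i = f i) -> (forall i, (i <= m)%N -> q`_i = g i) ->
  psmul f g m = (p * q)`_m.
Proof.
move=> hp hq; rewrite coefM /psmul; apply: eq_bigr => j _.
rewrite hp ?hq //; first exact: leq_subr.
by rewrite -ltnS.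
Qed.

Lemma mulA : associative (@psmul k).
Proof.
move=> f g h; apply: funext => m.
rewrite (@psmulE f _ (T m f) (T m g * T m h)); last 2 first.
- by move=> i hi; rewrite coefT.
- move=> i hi; rewrite (@psmulE g h (T m g) (T m h)) // => j hj; rewrite coefT //;
  exact: leq_trans hj hi.
rewrite (@psmulE _ h (T m f * T m g) (T m h)); last 2 first.
- move=> i hi; rewrite (@psmulE f g (T m f) (T m g)) // => j hj; rewrite coefT //;
  exact: leq_trans hj hi.
- by move=> i hi; rewrite coefT.
by rewrite mulrA.
Qed.
Lemma mulC : commutative (@psmul k).
Proof.
move=> f g; apply: funext => m.
rewrite (@psmulE f g (T m f) (T m g)) ?(@psmulE g f (T m g) (T m f)); try by move=> i hi; rewrite coefT.
by rewrite mulrC.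
Qed.
Lemma mul1 : left_id (psC 1) (@psmul k).
Proof.
move=> f; apply: funext => m.
rewrite (@psmulE _ f 1 (T m f)) ?mul1r ?coefT // => i hi.
- by rewrite coefC /psC; case: eqP.
- by rewrite coefT.
Qed.
Lemma mulD : left_distributive (@psmul k) (@psadd k).
Proof.
move=> f g h; apply: funext => m.
rewrite /psadd (@psmulE _ h (T m f + T m g) (T m h)); last 2 first.
- by move=> i hi; rewrite coefD !coefT.
- by move=> i hi; rewrite coefT.
rewrite mulrDl coefD -(@psmulE f h) -?(@psmulE g h) // => i hi; by rewrite coefT.
Qed.
Lemma one0 : psC (1:k) != psC 0.
Proof. apply/eqP => H; have := congr1 (fun f => f 0%N) H; rewrite /psC /= => /eqP; by rewrite oner_eq0. Qed.
HB.instance Definition _ := GRing.Zmodule_isComNzRing.Build PS mulA mulC mul1 mulD one0.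

Lemma mulE (f g : PS) : psmul f g = f * g. Proof. by []. Qed.
Lemma addE (f g : PS) : psadd f g = f + g. Proof. by []. Qed.
Lemma ps0E : psC 0 = 0 :> PS. Proof. by []. Qed.
Lemma ps1E : psC 1 = 1 :> PS. Proof. by []. Qed.
Lemma psexpE (f : PS) e : psexp f e = f ^+ e.
Proof. elim: e => [|e IH] //=; by rewrite /psexp /= -/(psexp f e) IH exprS. Qed.
Lemma psmonE n (x : 'I_n -> PS) al : psmon x al = \prod_(j < n) x j ^+ al j.
Proof. by rewrite /psmon; apply: eq_bigr => j _; rewrite psexpE. Qed.
Lemma bigaddE I (r : seq I) (P : pred I) (F : I -> PS) :
  \big[@psadd k/@psC k 0]_(i <- r | P i) F i = \sum_(i <- r | P i) F i.
Proof. by []. Qed.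
Lemma coefD (f g : PS) m : (f + g) m = f m + g m. Proof. by []. Qed.
Lemma coefN (f : PS) m : (- f) m = - f m. Proof. by []. Qed.
Lemma coefB (f g : PS) m : (f - g) m = f m - g m. Proof. by []. Qed.
Lemma coef0 m : (0 : PS) m = 0. Proof. by case: m. Qed.
Lemma coefsum I (r : seq I) (P : pred I) (F : I -> PS) m :
  (\sum_(i <- r | P i) F i) m = \sum_(i <- r | P i) F i m.
Proof. by apply: (big_morph (fun f : PS => f m)) => //; rewrite coef0. Qed.
Lemma coefCl (c : k) (f : PS) m : (pC c * f) m = c * f m.
Proof.
rewrite -mulE (@psmulE _ f c%:P (T m f)) ?coefCM ?coefT // => i hi.
  by rewrite coefC /psC; case: eqP.
by rewrite coefT.
Qed.
Lemma psscaleE (c : k) (f : PS) : psscale c f = pC c * f.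
Proof. by apply: funext => m; rewrite coefCl. Qed.
Lemma psCM (a b : k) : pC (a * b) = pC a * pC b.
Proof. by apply: funext => m; rewrite coefCl /psC; case: eqP => _; rewrite ?mulr0. Qed.
Lemma psCD (a b : k) : pC (a + b) = pC a + pC b.
Proof. by apply: funext => m; rewrite coefD /psC; case: eqP => _; rewrite ?addr0. Qed.
Lemma coefC0 (c : k) : pC c 0%N = c. Proof. by []. Qed.
Lemma coefM0 (f g : PS) : (f * g) 0%N = f 0%N * g 0%N.
Proof. by rewrite -mulE /psmul big_ord1 subn0. Qed.

Lemma test (f g : PS) : f * g + g = g * (f + 1). Proof. ring. Qed.
End Ring.


Section Zb.
Variable k : fieldType.
Local Notation PS := (PS k).
Local Notation pC c := (@psC k c : PS).

Definition zb (N : nat) (f : PS) := forall j, (j < N)%N -> f j = 0.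

Lemma zbM a b (f g : PS) : zb a f -> zb b g -> zb (a + b) (f * g).
Proof.
move=> hf hg j hj; rewrite -mulE /psmul big1 // => i _.
case: (ltnP i a) => hia; first by rewrite hf // mul0r.
rewrite hg ?mulr0 //; have := ltn_ord i; lia.
Qed.
Lemma zb1 : zb 0 1. Proof. by []. Qed.
Lemma zbX a e (f : PS) : zb a f -> zb (a * e) (f ^+ e).
Proof.
move=> hf; elim: e => [|e IH]; first by rewrite muln0.
by rewrite exprS mulnS; apply: zbM.
Qed.
Lemma zbW a b (f : PS) : (b <= a)%N -> zb a f -> zb b f.
Proof. by move=> hba hf j hj; apply: hf; apply: leq_trans hba. Qed.
Lemma zbD N (f g : PS) : zb N f -> zb N g -> zb N (f + g).
Proof. by move=> hf hg j hj; rewrite coefD hf ?hg ?addr0. Qed.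
Lemma zbN N (f : PS) : zb N f -> zb N (- f).
Proof. by move=> hf j hj; rewrite coefN hf ?oppr0. Qed.
Lemma zbB N (f g : PS) : zb N f -> zb N g -> zb N (f - g).
Proof. by move=> hf hg; apply: zbD => //; apply: zbN. Qed.
Lemma zbCl N c (f : PS) : zb N f -> zb N (pC c * f).
Proof. by move=> hf j hj; rewrite coefCl hf ?mulr0. Qed.
Lemma zb0 N : zb N 0. Proof. by move=> j _; rewrite coef0. Qed.
Lemma zbsum N I (r : seq I) (P : pred I) (F : I -> PS) :
  (forall i, P i -> zb N (F i)) -> zb N (\sum_(i <- r | P i) F i).
Proof. move=> h; apply: big_ind => //; [exact: zb0 | exact: zbD]. Qed.

Lemma lead_sub N (d g : PS) : zb N d -> zb N g -> g N != 0 ->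
  zb N.+1 (d - pC (d N / g N) * g).
Proof.
move=> hd hg hgN j; rewrite ltnS leq_eqVlt => /orP [/eqP -> | hj].
  by rewrite coefB coefCl mulfVK // subrr.
by rewrite coefB coefCl (hd j hj) (hg j hj) mulr0 subrr.
Qed.
End Zb.

Section Subst.
Variable k : fieldType.
Local Notation PS := (PS k).
Local Notation pC c := (@psC k c : PS).
Variable n : nat.
Variable x : 'I_n -> PS.
Hypothesis hx0 : forall j, x j 0%N = 0.

Definition deg (al : {ffun 'I_n -> nat}) := (\sum_(j < n) al j)%N.
Definition nf M (al : {ffun 'I_n -> 'I_M.+1}) : {ffun 'I_n -> nat} := [ffun j => val (al j)].
Definition addf (al be : {ffun 'I_n -> nat}) : {ffun 'I_n -> nat} := [ffun j => (al j + be j)%N].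
Definition subf (al be : {ffun 'I_n -> nat}) : {ffun 'I_n -> nat} := [ffun j => (al j - be j)%N].

Lemma leq_deg (be : {ffun 'I_n -> nat}) j : (be j <= deg be)%N.
Proof. by rewrite /deg (bigD1 j) //= leq_addr. Qed.
Lemma deg_add (al be : {ffun 'I_n -> nat}) : deg (addf al be) = (deg al + deg be)%N.
Proof. by rewrite /deg -big_split; apply: eq_bigr => j _; rewrite ffunE. Qed.
Lemma nf_inj M : injective (@nf M).
Proof.
move=> a1 a2 H; apply/ffunP => j; apply: val_inj.
by have := congr1 (fun f : {ffun 'I_n -> nat} => f j) H; rewrite !ffunE.
Qed.

Lemma zb_mon (al : {ffun 'I_n -> nat}) : zb (deg al) (psmon x al).
Proof.
rewrite psmonE /deg; apply: (big_ind2 (fun N f => zb N f)) => //.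
- by move=> ? ? ? ? ? ?; apply: zbM.
- move=> j _; have h1 : zb 1 (x j) by move=> i; rewrite ltnS leqn0 => /eqP ->; exact: hx0.
  by have := @zbX _ 1 (al j) _ h1; rewrite mul1n.
Qed.

Lemma psmon_add (al be : {ffun 'I_n -> nat}) : psmon x (addf al be) = (psmon x al : PS) * psmon x be.
Proof. by rewrite !psmonE -big_split; apply: eq_bigr => j _; rewrite ffunE exprD. Qed.
Lemma psmon0 : (psmon x [ffun=> 0%N] : PS) = 1.
Proof. by rewrite psmonE big1 // => j _; rewrite ffunE expr0. Qed.

Lemma pssubstE c m : pssubst x c m =
  \sum_(al : {ffun 'I_n -> 'I_m.+1} | (deg (nf al) <= m)%N) c (nf al) * psmon x (nf al) m.
Proof.
apply: eq_bigl => al; rewrite /deg; congr (_ <= _)%N.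
by apply: eq_bigr => j _; rewrite ffunE.
Qed.

Lemma RI m M (P : pred {ffun 'I_n -> nat}) (F : {ffun 'I_n -> nat} -> k) :
  (m <= M)%N -> (forall be, P be -> forall j, (be j <= m)%N) ->
  \sum_(al : {ffun 'I_n -> 'I_M.+1} | P (nf al)) F (nf al) =
  \sum_(al : {ffun 'I_n -> 'I_m.+1} | P (nf al)) F (nf al).
Proof.
move=> hmM hP.
pose h := fun al : {ffun 'I_n -> 'I_m.+1} =>
  [ffun j => widen_ord (hmM : (m.+1 <= M.+1)%N) (al j)].
have hnf al : nf (h al) = nf al by apply/ffunP => j; rewrite !ffunE.
rewrite (reindex h) /=.
  by apply: eq_big => al; rewrite hnf.
exists (fun al : {ffun 'I_n -> 'I_M.+1} => [ffun j => inord (val (al j))] : {ffun 'I_n -> 'I_m.+1}).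
  by move=> be _; apply/ffunP => j; rewrite !ffunE /= inord_val.
move=> al; rewrite inE => Hal; apply/ffunP => j; apply: val_inj; rewrite !ffunE /= inordK //.
rewrite ltnS; have := hP _ Hal j; by rewrite ffunE.
Qed.

Lemma sub_widen c m M : (m <= M)%N -> pssubst x c m =
  \sum_(al : {ffun 'I_n -> 'I_M.+1} | (deg (nf al) <= M)%N) c (nf al) * psmon x (nf al) m.
Proof.
move=> hmM.
rewrite (bigID (fun al => deg (nf al) <= m)%N) /= [X in _ + X]big1 ?addr0; last first.
  move=> al /andP [_]; rewrite -ltnNge => hlt; by rewrite zb_mon ?mulr0.
rewrite (eq_bigl (fun al => deg (nf al) <= m)%N); last first.
  move=> al; case h: (deg (nf al) <= m)%N; rewrite ?andbF ?andbT //.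
  exact: leq_trans h hmM.
rewrite (@RI m M (fun be => deg be <= m)%N (fun be => c be * psmon x be m)) //.
  by rewrite pssubstE.
by move=> be hb j; apply: leq_trans hb; apply: leq_deg.
Qed.

Lemma sub_single (be : {ffun 'I_n -> nat}) (b : k) m :
  pssubst x (fun al => if al == be then b else 0) m = b * psmon x be m.
Proof.
rewrite pssubstE; case: (leqP (deg be) m) => hb.
  pose al0 : {ffun 'I_n -> 'I_m.+1} := [ffun j => inord (be j)].
  have nf0 : nf al0 = be.
    apply/ffunP => j; rewrite /nf !ffunE; rewrite /= inordK // ltnS; exact: leq_trans (leq_deg be j) hb.
  rewrite (bigD1 al0) /=; last by rewrite nf0.
  rewrite nf0 eqxx big1 ?addr0 // => al /andP [_ hne].
  case: eqP => [H|]; last by rewrite mul0r.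
  by move: hne; rewrite -(nf_inj (etrans H (esym nf0))) eqxx.
rewrite big1; first by rewrite zb_mon ?mulr0.
move=> al hal; case: eqP => [H|]; last by rewrite mul0r.
by move: hal; rewrite H leqNgt hb.
Qed.

End Subst.


Section Closure.
Variable k : fieldType.
Local Notation PS := (PS k).
Local Notation pC c := (@psC k c : PS).
Variable n : nat.
Variable x : 'I_n -> PS.
Hypothesis hx0 : forall j, x j 0%N = 0.

Lemma Rconst b : in_psalg x (pC b).
Proof.
exists (fun al => if al == [ffun=> 0%N] then b else 0) => m.
rewrite sub_single // psmon0.
by case: m => [|m]; rewrite /= /psC /= ?mulr1 ?mulr0.
Qed.

Lemma RD (f g : PS) : in_psalg x f -> in_psalg x g -> in_psalg x (f + g).
Proof.
move=> [c hc] [d hd]; exists (fun al => c al + d al) => m.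
rewrite coefD hc hd /pssubst -big_split; apply: eq_bigr => al _; by rewrite mulrDl.
Qed.

Definition addo m (al be : {ffun 'I_n -> 'I_m.+1}) : {ffun 'I_n -> 'I_m.+1} :=
  [ffun j => inord (val (al j) + val (be j))].
Definition subo m (ga al : {ffun 'I_n -> 'I_m.+1}) : {ffun 'I_n -> 'I_m.+1} :=
  [ffun j => inord (val (ga j) - val (al j))].

Lemma nf_addo m (al be : {ffun 'I_n -> 'I_m.+1}) :
  (deg (addf (nf al) (nf be)) <= m)%N -> nf (addo al be) = addf (nf al) (nf be).
Proof.
move=> h; apply/ffunP => j; rewrite /nf /addf /addo !ffunE /= inordK // ltnS.
have := leq_deg (addf (nf al) (nf be)) j; rewrite /addf /nf !ffunE => h2.
exact: leq_trans h2 h.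
Qed.

Lemma nf_addo' m (al be : {ffun 'I_n -> 'I_m.+1}) :
  (forall j, nf al j <= nf (addo al be) j)%N -> nf (addo al be) = addf (nf al) (nf be).
Proof.
move=> h; apply/ffunP => j; have := h j; rewrite /nf /addf /addo !ffunE /=.
case: (ltnP (val (al j) + val (be j)) m.+1) => hlt; first by rewrite inordK.
rewrite /inord val_insubd ltnNge hlt /=.
move: hlt; case: (al j) => [u hu]; case: (be j) => [v hv] /=; lia.
Qed.

Lemma subf_addf (a b : {ffun 'I_n -> nat}) : subf (addf a b) a = b.
Proof. by apply/ffunP => j; rewrite !ffunE addKn. Qed.

Lemma RM (f g : PS) : in_psalg x f -> in_psalg x g -> in_psalg x (f * g).
Proof.
move=> [c hc] [d hd].
have -> : f = pssubst x c by apply: funext.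
have -> : g = pssubst x d by apply: funext.
exists (fun ga => \sum_(al : {ffun 'I_n -> 'I_(deg ga).+1} | [forall j, nf al j <= ga j]%N)
   c (nf al) * d (subf ga (nf al))) => m.
set Fm := \sum_(al : {ffun 'I_n -> 'I_m.+1} | (deg (nf al) <= m)%N) pC (c (nf al)) * (psmon x (nf al) : PS).
set Gm := \sum_(al : {ffun 'I_n -> 'I_m.+1} | (deg (nf al) <= m)%N) pC (d (nf al)) * (psmon x (nf al) : PS).
have hF j : (j <= m)%N -> pssubst x c j = Fm j.
  move=> hj; rewrite (sub_widen hx0 c hj) /Fm coefsum; apply: eq_bigr => al _; by rewrite coefCl.
have hG j : (j <= m)%N -> pssubst x d j = Gm j.
  move=> hj; rewrite (sub_widen hx0 d hj) /Gm coefsum; apply: eq_bigr => al _; by rewrite coefCl.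
have -> : ((pssubst x c : PS) * pssubst x d) m = (Fm * Gm) m.
  rewrite -!mulE /psmul; apply: eq_bigr => j _; rewrite hF ?hG //.
    exact: leq_subr.
  by rewrite -ltnS.
rewrite /Fm /Gm mulr_suml coefsum.
under eq_bigr => al _ do rewrite mulr_sumr coefsum.
under eq_bigr => al _ do under eq_bigr => be _ do rewrite mulrACA -psCM -psmon_add coefCl.
rewrite pair_big_dep /=.
rewrite (bigID (fun p => deg (addf (nf p.1) (nf p.2)) <= m)%N) /= [X in _ + X]big1 ?addr0; last first.
  move=> p /andP [_]; rewrite -ltnNge => hlt; by rewrite (zb_mon hx0) ?mulr0.
rewrite (eq_bigl (fun p => deg (addf (nf p.1) (nf p.2)) <= m)%N); last first.
  move=> p; case h: (deg (addf (nf p.1) (nf p.2)) <= m)%N; rewrite ?andbF ?andbT //.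
  by move: h; rewrite deg_add => h; apply/andP; split; apply: leq_trans h; rewrite ?leq_addr ?leq_addl.
rewrite pssubstE.
have eR : forall ga : {ffun 'I_n -> 'I_m.+1}, (deg (nf ga) <= m)%N ->
   (\sum_(al : {ffun 'I_n -> 'I_(deg (nf ga)).+1} | [forall j, nf al j <= nf ga j]%N)
      c (nf al) * d (subf (nf ga) (nf al))) * psmon x (nf ga) m =
   \sum_(al : {ffun 'I_n -> 'I_m.+1} | [forall j, nf al j <= nf ga j]%N)
      c (nf al) * d (subf (nf ga) (nf al)) * psmon x (nf ga) m.
  move=> ga hga; rewrite mulr_suml.
  rewrite -(@RI _ _ (deg (nf ga)) m (fun be => [forall j, be j <= nf ga j]%N)
            (fun be => c be * d (subf (nf ga) be) * psmon x (nf ga) m)) //.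
  move=> be /forallP hb j; apply: leq_trans (hb j) _; exact: leq_deg.
rewrite (eq_bigr _ eR) pair_big_dep /=.
pose h' := fun p : {ffun 'I_n -> 'I_m.+1} * {ffun 'I_n -> 'I_m.+1} => (addo p.1 p.2, p.1).
rewrite [RHS](reindex h') /=; last first.
  exists (fun q : {ffun 'I_n -> 'I_m.+1} * {ffun 'I_n -> 'I_m.+1} => (q.2, subo q.1 q.2)).
    move=> [p1 p2]; rewrite inE /= => /andP [hdeg /forallP hle].
    have hn := nf_addo' hle.
    congr pair; apply/ffunP => j; apply: val_inj.
    have hlt : (val (p1 j) + val (p2 j) < m.+1)%N.
      have := ltn_ord (addo p1 p2 j).
      have := congr1 (fun f : {ffun 'I_n -> nat} => f j) hn; rewrite /nf /addf !ffunE /= => e; by rewrite -e.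
    by rewrite /subo /addo !ffunE /= (inordK hlt) addKn inord_val.
  move=> [q1 q2]; rewrite inE /= => /andP [hdeg /forallP hle].
  rewrite /h' /=; congr pair; apply/ffunP => j; rewrite /addo /subo !ffunE /=.
  have hj := hle j; rewrite /nf !ffunE in hj.
  have h1 : (val (q1 j) - val (q2 j) < m.+1)%N := leq_ltn_trans (leq_subr _ _) (ltn_ord _).
  by rewrite (inordK h1) subnKC // inord_val.
apply: eq_big.
  move=> [p1 p2] /=; apply/idP/idP.
    move=> hq; rewrite (nf_addo hq) hq /=; apply/forallP => j; by rewrite /addf /nf !ffunE leq_addr.
  by move=> /andP [hq /forallP hle]; rewrite -(nf_addo' hle).
move=> [p1 p2] /= hq; by rewrite (nf_addo hq) subf_addf.
Qed.

End Closure.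


Section Alg.
Variable k : fieldType.
Local Notation PS := (PS k).
Local Notation pC c := (@psC k c : PS).
Variable n : nat.
Variable y : 'I_n -> PS.
Local Notation R := (in_psalg y).
Hypothesis hy0 : forall j, y j 0%N = 0.

Lemma RC c : R (pC c). Proof. exact: Rconst. Qed.
Lemma RDD (f g : PS) : R f -> R g -> R (f + g). Proof. exact: RD. Qed.
Lemma RMM (f g : PS) : R f -> R g -> R (f * g). Proof. exact: RM. Qed.
Lemma psCN1 (f : PS) : pC (-1) * f = - f.
Proof. by apply: funext => m; rewrite coefCl coefN mulN1r. Qed.
Lemma RNN (f : PS) : R f -> R (- f).
Proof. by move=> h; rewrite -psCN1; apply: RMM => //; apply: RC. Qed.
Lemma RBB (f g : PS) : R f -> R g -> R (f - g).
Proof. by move=> hf hg; apply: RDD => //; apply: RNN. Qed.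
Lemma Rsum I (r : seq I) (P : pred I) (F : I -> PS) :
  (forall i, P i -> R (F i)) -> R (\sum_(i <- r | P i) F i).
Proof. move=> h; apply: big_ind => //; [exact: RC 0 | exact: RDD]. Qed.

Definition mI (f : PS) := R f /\ f 0%N = 0.

Lemma mI_zb (f : PS) : mI f -> zb 1 f.
Proof. by move=> [_ h] j; rewrite ltnS leqn0 => /eqP ->. Qed.
Lemma mI_mulR (r f : PS) : R r -> mI f -> mI (r * f).
Proof. by move=> hr [hf h0]; split; [apply: RMM | rewrite coefM0 h0 mulr0]. Qed.

Definition M2' (f : PS) := exists s : seq (PS * PS),
  (forall p, p \in s -> mI p.1 /\ mI p.2) /\ f = \sum_(p <- s) p.1 * p.2.

Lemma M2'0 : M2' 0. Proof. by exists [::]; rewrite big_nil. Qed.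
Lemma M2'D (f g : PS) : M2' f -> M2' g -> M2' (f + g).
Proof.
move=> [s [hs ->]] [t [ht ->]]; exists (s ++ t); rewrite big_cat; split => // p.
by rewrite mem_cat => /orP [/hs|/ht].
Qed.
Lemma M2'sum I (r : seq I) (P : pred I) (F : I -> PS) :
  (forall i, P i -> M2' (F i)) -> M2' (\sum_(i <- r | P i) F i).
Proof. move=> h; apply: big_ind => //; [exact: M2'0 | exact: M2'D]. Qed.
Lemma M2'prod (f g : PS) : mI f -> mI g -> M2' (f * g).
Proof. by move=> hf hg; exists [:: (f, g)]; rewrite big_seq1; split => // p; rewrite inE => /eqP ->. Qed.
Lemma M2'mulR (r f : PS) : R r -> M2' f -> M2' (r * f).
Proof.
move=> hr [s [hs ->]]; exists [seq (r * p.1, p.2) | p <- s]; split.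
  move=> p /mapP [q /hs [h1 h2] ->] /=; split => //; exact: mI_mulR.
by rewrite big_map mulr_sumr; apply: eq_bigr => p _; rewrite mulrA.
Qed.
Lemma M2'_mI (f : PS) : M2' f -> mI f.
Proof.
move=> [s [hs ->]]; rewrite big_seq; split.
  by apply: Rsum => p /hs [[h1 _] [h2 _]]; apply: RMM.
by rewrite coefsum big1 // => p /hs [[_ h1] _]; rewrite coefM0 h1 mul0r.
Qed.

Lemma M2'_M2 (f : PS) : M2' f -> max_ideal2 R f.
Proof.
move=> [s [hs ->]].
exists (size s), (fun j => (nth (0, 0) s j).1), (fun j => (nth (0, 0) s j).2); split.
  by move=> j; have := hs _ (mem_nth (0, 0) (ltn_ord j)).
by move=> m; rewrite (big_nth (0, 0)) big_mkord.
Qed.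
Lemma M2_M2' (f : PS) : max_ideal2 R f -> M2' f.
Proof.
move=> [N [a [b [h e]]]].
exists [seq (a j, b j) | j <- index_enum 'I_N]; split.
  by move=> p /mapP [j _ ->] /=; apply: h.
by rewrite big_map; apply: funext => m; rewrite e.
Qed.

Inductive Pol (x : nat -> PS) (i : nat) : PS -> Prop :=
 | PolC c : Pol x i (pC c)
 | PolX l : (l < i)%N -> Pol x i (x l)
 | PolD f g : Pol x i f -> Pol x i g -> Pol x i (f + g)
 | PolM f g : Pol x i f -> Pol x i g -> Pol x i (f * g).

Lemma PolN x i f : Pol x i f -> Pol x i (- f).
Proof. by move=> h; rewrite -psCN1; apply: PolM => //; apply: PolC. Qed.
Lemma PolB x i f g : Pol x i f -> Pol x i g -> Pol x i (f - g).
Proof. by move=> hf hg; apply: PolD => //; apply: PolN. Qed.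
Lemma Pol0 x i : Pol x i 0. Proof. exact: (PolC x i 0). Qed.
Lemma Pol_sum x i I (r : seq I) (P : pred I) (F : I -> PS) :
  (forall j, P j -> Pol x i (F j)) -> Pol x i (\sum_(j <- r | P j) F j).
Proof. move=> h; apply: big_ind => //; [exact: Pol0 | exact: PolD]. Qed.
Lemma Pol_mono x i i' f : (i <= i')%N -> Pol x i f -> Pol x i' f.
Proof.
move=> hii'; elim=> [c|l hl|f1 g1 _ h1 _ h2|f1 g1 _ h1 _ h2].
- exact: PolC.
- by apply: PolX; apply: leq_trans hii'.
- exact: PolD.
- exact: PolM.
Qed.
Lemma Pol_ext x x' i f : (forall l, (l < i)%N -> x l = x' l) -> Pol x i f -> Pol x' i f.
Proof.
move=> hx; elim=> [c|l hl|f1 g1 _ h1 _ h2|f1 g1 _ h1 _ h2].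
- exact: PolC.
- by rewrite hx //; apply: PolX.
- exact: PolD.
- exact: PolM.
Qed.
Lemma Pol_R x i f : (forall l, (l < i)%N -> R (x l)) -> Pol x i f -> R f.
Proof.
move=> hx; elim=> [c|l hl|f1 g1 _ h1 _ h2|f1 g1 _ h1 _ h2].
- exact: RC.
- exact: hx.
- exact: RDD.
- exact: RMM.
Qed.
Lemma Pol_0 x f : Pol x 0 f -> exists c, f = pC c.
Proof.
elim=> [c|l hl|f1 g1 _ [c1 ->] _ [c2 ->]|f1 g1 _ [c1 ->] _ [c2 ->]].
- by exists c.
- by [].
- by exists (c1 + c2); rewrite psCD.
- by exists (c1 * c2); rewrite psCM.
Qed.

Definition ef (l : nat) : {ffun 'I_n -> nat} := [ffun j : 'I_n => nat_of_bool (val j == l)].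

Lemma Pol_poly x i f : (i <= n)%N -> Pol x i f -> in_polyalg (fun j : 'I_n => x j) i f.
Proof.
move=> hin; elim=> [c|l hl|f1 g1 _ [s [hs e1]] _ [t [ht e2]]|f1 g1 _ [s [hs e1]] _ [t [ht e2]]].
- exists [:: (c, [ffun=> 0%N])]; split.
    by move=> p; rewrite inE => /eqP -> j _; rewrite ffunE.
  move=> m; rewrite bigaddE big_seq1 /= psscaleE.
  have -> : (psmon (fun j : 'I_n => x j) [ffun=> 0%N] : PS) = 1.
    by rewrite psmonE big1 // => j _; rewrite ffunE expr0.
  by rewrite mulr1.
- have hln : (l < n)%N by apply: leq_trans hin.
  exists [:: (1, ef l)]; split.
    move=> p; rewrite inE => /eqP -> j hj; rewrite ffunE.
    by case: eqP => // hjl; move: hj; rewrite hjl leqNgt hl.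
  move=> m; rewrite bigaddE big_seq1 /= psscaleE.
  have -> : (psmon (fun j : 'I_n => x j) (ef l) : PS) = x l.
    rewrite psmonE (bigD1 (Ordinal hln)) //= big1 ?mulr1.
      by rewrite ffunE eqxx expr1.
    move=> j hj; rewrite ffunE; case: eqP => [hjl|]; last by rewrite expr0.
    by exfalso; move/eqP: hj; apply; apply: val_inj.
  by rewrite mul1r.
- exists (s ++ t); split.
    by move=> p; rewrite mem_cat => /orP [/hs|/ht].
  by move=> m; rewrite bigaddE big_cat coefD e1 e2.
- exists [seq (p.1 * q.1, addf p.2 q.2) | p <- s, q <- t]; split.
    move=> p /allpairsP [[p1 q1] [h1 h2 ->]] j hj /=.
    by rewrite ffunE (hs _ h1 j hj) (ht _ h2 j hj).
  have -> : f1 = \sum_(p <- s) (psscale p.1 (psmon (fun j : 'I_n => x j) p.2) : PS) by apply: funext.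
  have -> : g1 = \sum_(p <- t) (psscale p.1 (psmon (fun j : 'I_n => x j) p.2) : PS) by apply: funext.
  move=> m; rewrite bigaddE big_allpairs_dep /= mulr_suml; congr (_ m).
  apply: eq_bigr => p _; rewrite mulr_sumr; apply: eq_bigr => q _.
  by rewrite !psscaleE psmon_add psCM mulrACA.
Qed.

End Alg.


Section Dec.
Variable k : fieldType.
Local Notation PS := (PS k).
Local Notation pC c := (@psC k c : PS).
Variable n : nat.
Variable y : 'I_n -> PS.
Local Notation R := (in_psalg y).
Hypothesis hy0 : forall j, y j 0%N = 0.
Variable x : nat -> PS.
Variable i : nat.
Hypothesis hxm : forall l, (l < i)%N -> mI y (x l).

Definition Lin (d : nat -> k) : PS := \sum_(l < i) pC (d l) * x l.
Definition Dec (f : PS) := exists c0 (d : nat -> k) u, M2' y u /\ f = pC c0 + Lin d + u.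

Lemma Lin_mI d : mI y (Lin d).
Proof.
split.
  apply: Rsum => // l _; apply: RMM => //; first exact: RC.
  by case: (hxm (ltn_ord l)).
rewrite /Lin coefsum big1 // => l _; rewrite coefCl.
by case: (hxm (ltn_ord l)) => _ ->; rewrite mulr0.
Qed.

Lemma DecC c : Dec (pC c).
Proof.
exists c, (fun _ => 0), 0; split; first exact: M2'0.
rewrite /Lin big1 ?addr0 // => l _; by rewrite ps0E mul0r.
Qed.

Lemma DecX l : (l < i)%N -> Dec (x l).
Proof.
move=> hl; exists 0, (fun l' => if l' == l then 1 else 0), 0; split; first exact: M2'0.
rewrite /Lin (bigD1 (Ordinal hl)) //= eqxx big1 ?ps0E ?ps1E ?add0r ?addr0 ?mul1r //.
move=> j hj; case: eqP => [hjl|]; last by rewrite ps0E mul0r.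
by exfalso; move/eqP: hj; apply; apply: val_inj.
Qed.

Lemma LinD d d' : Lin d + Lin d' = Lin (fun l => d l + d' l).
Proof. by rewrite /Lin -big_split; apply: eq_bigr => l _; rewrite psCD mulrDl. Qed.
Lemma LinC c d : pC c * Lin d = Lin (fun l => c * d l).
Proof. by rewrite /Lin mulr_sumr; apply: eq_bigr => l _; rewrite psCM mulrA. Qed.

Lemma DecD f g : Dec f -> Dec g -> Dec (f + g).
Proof.
move=> [c [d [u [hu ->]]]] [c' [d' [u' [hu' ->]]]].
exists (c + c'), (fun l => d l + d' l), (u + u'); split; first exact: M2'D.
rewrite psCD -LinD; ring.
Qed.

Lemma DecM f g : Dec f -> Dec g -> Dec (f * g).
Proof.
move=> [c [d [u [hu ->]]]] [c' [d' [u' [hu' ->]]]].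
exists (c * c'), (fun l => c * d' l + c' * d l),
  (Lin d * Lin d' + pC c * u' + Lin d * u' + (pC c' + Lin d' + u') * u); split.
  have [hL _] := Lin_mI d; have [hL' _] := Lin_mI d'.
  have [hu'R _] := M2'_mI hy0 hu'.
  apply: M2'D; first apply: M2'D; first apply: M2'D.
  - by apply: M2'prod; apply: Lin_mI.
  - by apply: M2'mulR => //; apply: RC.
  - exact: M2'mulR.
  - apply: M2'mulR => //; apply: RDD => //; apply: RDD => //; exact: RC.
rewrite psCM -LinD -!LinC; ring.
Qed.

Lemma Pol_Dec f : Pol x i f -> Dec f.
Proof.
elim=> [c|l hl|f1 g1 _ h1 _ h2|f1 g1 _ h1 _ h2].
- exact: DecC.
- exact: DecX.
- exact: DecD.
- exact: DecM.
Qed.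
End Dec.


Section Main.
Variable k : fieldType.
Local Notation PS := (PS k).
Local Notation pC c := (@psC k c : PS).
Variable n : nat.
Variable y : 'I_n -> PS.
Local Notation R := (in_psalg y).
Hypothesis hy0 : forall j, y j 0%N = 0.
Variable A : nat -> nat.
Hypothesis Ainc : forall l l', (l < l')%N -> (l' < n)%N -> (A l < A l')%N.
Hypothesis HKA : forall m, HK R m <-> exists l, (l < n)%N /\ A l = m.
Variable Y : nat -> PS.
Hypothesis hYm : forall j, (j < n)%N -> mI y (Y j).
Hypothesis gen : forall f, mI y f -> exists r : 'I_n -> PS, (forall j, R (r j)) /\ f = \sum_(j < n) r j * Y j.

Lemma Amono l l' : (l <= l')%N -> (l' < n)%N -> (A l <= A l')%N.
Proof.
rewrite leq_eqVlt => /orP [/eqP -> //| hl] hl'.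
by apply: ltnW; apply: Ainc.
Qed.

Lemma approx i (x : nat -> PS) : (i < n)%N ->
  (forall l, (l < i)%N -> mI y (x l) /\ has_val (x l) (A l)) ->
  forall N, (N <= A i)%N -> forall f, mI y f ->
  exists p, [/\ Pol x i p, p 0%N = 0 & zb N (f - p)].
Proof.
move=> hi hx; elim=> [|N IH] hN f hf.
  by exists 0; split; [exact: Pol0 | exact: coef0 | ].
have [p [hp hp0 hfp]] := IH (ltnW hN) f hf.
have hpR : R p := Pol_R hy0 (fun l hl => (hx l hl).1.1) hp.
have hdm : mI y (f - p).
  by split; [apply: (RBB hy0) => //; case: hf | rewrite coefB hp0 subr0; case: hf].
case: (eqVneq ((f - p) N) 0) => hdN.
  exists p; split => // j; rewrite ltnS leq_eqVlt => /orP [/eqP -> //| hj]; exact: hfp.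
have hvm : vset (max_ideal R) N by exists (f - p); split => //; split.
suff [g [hg hg0 hgz hgN]] : exists g, [/\ Pol x i g, g 0%N = 0, zb N g & g N != 0].
  exists (p + pC ((f - p) N / g N) * g); split.
  - apply: PolD => //; apply: PolM => //; exact: PolC.
  - by rewrite coefD coefCl hp0 hg0 mulr0 addr0.
  - by have := lead_sub hfp hgz hgN; rewrite opprD addrA.
case: (pselect (HK R N)) => hHK.
  have [l [hln hlN]] := (HKA N).1 hHK.
  have hli : (l < i)%N.
    rewrite ltnNge; apply/negP => hil.
    have := Amono hil hln; lia.
  have [hxl [hxN hxz]] := hx l hli.
  exists (x l); split; [exact: PolX | exact: hxl.2 | by rewrite -hlN | by rewrite -hlN].
have hv2 : vset (max_ideal2 R) N.
  by apply: contrapT => hn; apply: hHK; split.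
have [h [h2 [hhN hhz]]] := hv2.
have [s [hs hse]] := M2_M2' h2.
have hex : forall q : PS, exists Fq : PS, mI y q -> [/\ Pol x i Fq, Fq 0%N = 0 & zb N (q - Fq)].
  move=> q; case: (pselect (mI y q)) => hq; last by exists 0.
  by have [pq hpq] := IH (ltnW hN) q hq; exists pq.
have [F hF] := choice hex.
pose H := \sum_(q <- s) F q.1 * F q.2.
have hzH : zb N.+1 ((h : PS) - H).
  rewrite hse /H -sumrB big_seq; apply: zbsum => q /hs [hq1 hq2].
  have [_ hF10 hF1] := hF _ hq1; have [_ hF20 hF2] := hF _ hq2.
  have -> : q.1 * q.2 - F q.1 * F q.2 = (q.1 - F q.1) * q.2 + F q.1 * (q.2 - F q.2) by ring.
  apply: zbD.
    have := zbM hF1 (mI_zb hq2); by rewrite addn1.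
  have h1 : zb 1 (F q.1) by move=> j; rewrite ltnS leqn0 => /eqP ->.
  have := zbM h1 hF2; by rewrite add1n.
have hHh j : (j <= N)%N -> H j = h j.
  move=> hj; have := hzH j; rewrite ltnS coefB => /(_ hj) /eqP.
  by rewrite subr_eq0 => /eqP.
exists H; split.
- rewrite /H big_seq; apply: Pol_sum => q /hs [hq1 hq2].
  by apply: PolM; [case: (hF _ hq1) | case: (hF _ hq2)].
- rewrite /H coefsum big_seq big1 // => q /hs [hq1 hq2].
  by rewrite coefM0; case: (hF _ hq1) => _ -> _; rewrite mul0r.
- by move=> j hj; rewrite hHh ?hhz // ltnW.
- by rewrite hHh.
Qed.


Lemma exists_step i (x z : nat -> PS) (tau : nat -> nat) : (i < n)%N ->
  (forall l, (l < i)%N -> [/\ mI y (x l), has_val (x l) (A l), Pol x l (z l) & Y (tau l) = x l + z l]) ->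
  exists j p, [/\ (j < n)%N, (forall l, (l < i)%N -> tau l <> j), Pol x i p, p 0%N = 0
                & has_val (Y j - p) (A i)].
Proof.
move=> hi hx.
apply: contrapT => hno.
have hxx : forall l, (l < i)%N -> mI y (x l) /\ has_val (x l) (A l).
  by move=> l hl; case: (hx l hl).
have hxm : forall l, (l < i)%N -> mI y (x l) by move=> l hl; case: (hx l hl).
have hex : forall j, exists gp : PS * PS, (j < n)%N ->
   [/\ Y j = gp.1 + gp.2, Pol x i gp.2, gp.2 0%N = 0 & zb (A i).+1 gp.1].
  move=> j; case: (ltnP j n) => hjn; last by exists (0, 0).
  case: (pselect (exists l, (l < i)%N /\ tau l = j)) => [[l [hl hlj]] | hnu].
    exists (0, x l + z l) => _; have [hxl _ hzl hY] := hx l hl; split.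
    - by rewrite /= add0r -hlj hY.
    - by apply: PolD; [exact: PolX | exact: Pol_mono (ltnW hl) hzl].
    - by have := (hYm hjn).2; rewrite -hlj hY.
    - exact: zb0.
  have [p [hp hp0 hz]] := approx hi hxx (leqnn (A i)) (hYm hjn).
  exists (Y j - p, p) => _; split => //=.
  - by rewrite subrK.
  - move=> j'; rewrite ltnS leq_eqVlt => /orP [/eqP -> | hj']; last exact: hz.
    apply: contrapT => hne; apply: hno; exists j, p; split => //.
      by move=> l hl hlj; apply: hnu; exists l.
    by split => //; apply/eqP.
have [GP hGP] := choice hex.
have [f [[hfR hf0] [hfN hfz]]] : vset (max_ideal R) (A i).
  by case: ((HKA (A i)).2 (ex_intro _ i (conj hi erefl))).
have [r [hr hfe]] := gen (conj hfR hf0).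
pose G := \sum_(j < n) pC (r j 0%N) * (GP j).1.
pose P := \sum_(j < n) pC (r j 0%N) * (GP j).2.
pose U := \sum_(j < n) (r j - pC (r j 0%N)) * Y j.
have hfGPU : (f : PS) = G + P + U.
  rewrite hfe /G /P /U -!big_split /=; apply: eq_bigr => j _.
  have [hY _ _ _] := hGP j (ltn_ord j); rewrite hY; ring.
have hGz : zb (A i).+1 G.
  by apply: zbsum => j _; apply: zbCl; case: (hGP j (ltn_ord j)).
have hPpol : Pol x i P.
  by apply: Pol_sum => j _; apply: PolM; [exact: PolC | case: (hGP j (ltn_ord j))].
have hUM : M2' y U.
  apply: M2'sum => j _; apply: M2'prod; last exact: hYm.
  split; first by apply: (RBB hy0) => //; apply: RC.
  by rewrite coefB coefC0 subrr.
have [c0 [d [u [hu hPe]]]] := Pol_Dec hy0 hxm hPpol.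
have hc0 : c0 = 0.
  have : P 0%N = 0.
    rewrite /P coefsum big1 // => j _; rewrite coefCl.
    by case: (hGP j (ltn_ord j)) => _ _ -> _; rewrite mulr0.
  rewrite hPe !coefD coefC0 (Lin_mI hy0 hxm d).2 (M2'_mI hy0 hu).2.
  by rewrite !addr0.
pose E := (f : PS) - G.
have hEU : E = Lin x i d + (u + U).
  by rewrite /E hfGPU hPe hc0 ps0E; ring.
have hEz : zb (A i) E := zbB hfz (zbW (leqnSn _) hGz).
have hEN : E (A i) = f (A i).
  by rewrite /E coefB hGz // subr0.
have hUM2 : M2' y (u + U) := M2'D hu hUM.
have hUE : u + U = E - Lin x i d by rewrite hEU; ring.
case: (pselect (exists l, (l < i)%N && (d l != 0))) => [hexb | hnone].
  case: (ex_minnP hexb) => l0 /andP [hl0 hdl0] hmin.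
  have hl0n : (l0 < n)%N := ltn_trans hl0 hi.
  have hdlt l : (l < l0)%N -> d l = 0.
    move=> hl; apply/eqP; case: eqP => // /eqP hdl.
    have := hmin l; rewrite (ltn_trans hl hl0) hdl => /(_ isT); by rewrite leqNgt hl.
  have hLz : zb (A l0) (Lin x i d).
    rewrite /Lin; apply: zbsum => l _.
    case: (ltnP l l0) => hll0.
      by rewrite hdlt // ps0E mul0r; apply: zb0.
    apply: zbCl; apply: (zbW (Amono hll0 (ltn_trans (ltn_ord l) hi))).
    by case: (hx l (ltn_ord l)) => _ [_ hz].
  have hLN : Lin x i d (A l0) = d l0 * x l0 (A l0).
    rewrite /Lin coefsum (bigD1 (Ordinal hl0)) //= coefCl big1 ?addr0 // => l hl.
    rewrite coefCl; case: (ltngtP l l0) => [hlt|hgt|heq].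
    - by rewrite hdlt // mul0r.
    - case: (hx l (ltn_ord l)) => _ [_ hz].
      by rewrite (hz (A l0) (Ainc hgt (ltn_trans (ltn_ord l) hi))) mulr0.
    - by exfalso; move/eqP: hl; apply; apply: val_inj.
  have hA0 : (A l0 < A i)%N := Ainc hl0 hi.
  have [_ hn2] := (HKA (A l0)).2 (ex_intro _ l0 (conj hl0n erefl)).
  apply: hn2; exists (u + U); split; first exact: M2'_M2.
  split.
    rewrite hUE coefB hLN hEz // sub0r oppr_eq0 mulf_neq0 //.
    by case: (hx l0 hl0) => _ [].
  change (zb (A l0) (u + U)); rewrite hUE.
  by apply: zbB => //; apply: zbW hEz; apply: ltnW.
have hL0 : Lin x i d = 0.
  rewrite /Lin big1 // => l _.
  have -> : d l = 0.
    apply/eqP; apply: contrapT => hne; apply: hnone; exists l; rewrite ltn_ord /=.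
    exact/negP.
  by rewrite ps0E mul0r.
have [_ hn2] := (HKA (A i)).2 (ex_intro _ i (conj hi erefl)).
apply: hn2; exists (u + U); split; first exact: M2'_M2.
rewrite hUE hL0 subr0; split; first by rewrite hEN.
exact: hEz.
Qed.

Lemma build i : (i <= n)%N -> exists (tau : nat -> nat) (x z : nat -> PS),
  forall l, (l < i)%N ->
  [/\ (tau l < n)%N, (forall l', (l' < i)%N -> tau l' = tau l -> l' = l),
      mI y (x l) /\ has_val (x l) (A l), Pol x l (z l) /\ z l 0%N = 0
    & Y (tau l) = x l + z l].
Proof.
elim: i => [|i IH] hi.
  by exists (fun _ => 0%N), (fun _ => 0), (fun _ => 0).
have [tau [x [z H]]] := IH (ltnW hi).
have [j [p [hjn hjnew hp hp0 hv]]] : exists j p, [/\ (j < n)%N, (forall l, (l < i)%N -> tau l <> j),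
   Pol x i p, p 0%N = 0 & has_val (Y j - p) (A i)].
  apply: (@exists_step i x z tau hi) => l hl; have [_ _ [hxl hvl] [hzl _] hY] := H l hl; by split.
exists (fun l => if l == i then j else tau l), (fun l => if l == i then Y j - p else x l),
  (fun l => if l == i then p else z l).
have hxeq l' : (l' < i)%N -> (if l' == i then Y j - p else x l') = x l'.
  by move=> hl'; rewrite (ltn_eqF hl').
have hpR : R p.
  by apply: (Pol_R hy0) hp => l hl; have [_ _ [[]]] := H l hl.
move=> l hl; case: (eqVneq l i) => [-> | hli].
  split => //.
  - move=> l' hl'; case: eqVneq => [-> //| hne] htj; exfalso.
    have hl'i : (l' < i)%N by rewrite ltn_neqAle hne -ltnS.
    exact: hjnew l' hl'i htj.
  - split => //; split.
      by apply: (RBB hy0) => //; case: (hYm hjn).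
    by rewrite coefB hp0 subr0; case: (hYm hjn).
  - split => //; apply: Pol_ext hp => l' hl'; exact/esym/hxeq.
  - by rewrite subrK.
have hl' : (l < i)%N by rewrite ltn_neqAle hli -ltnS.

have [htl hinj hxl [hzl hz0] hY] := H l hl'.
split => //.
- move=> l'' hl''; case: eqVneq => [-> | hne] htj.
    by exfalso; apply: (hjnew l hl'); rewrite -htj.
  apply: hinj => //; by rewrite ltn_neqAle hne -ltnS.
- split => //; apply: Pol_ext hzl => l'' hl''; apply/esym/hxeq; exact: ltn_trans hl'' hl'.
Qed.

End Main.


Theorem mainTheorem13 (k : fieldType) (n : nat) (y : 'I_n -> ps k)
  (a : 'I_n -> nat) :
  (* R = k[[y_1,...,y_n]] ⊆ k[[t]] is finite birational *)
  finite_over (in_psalg y) ->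
  birational (in_psalg y) ->
  (* y_1, ..., y_n is a minimal system of generators of m *)
  min_gen_sys (in_psalg y) y ->
  (* a_1 < ... < a_n is the Herzog--Kunz sequence v(m) \ v(m^2) *)
  (forall i j : 'I_n, (i < j)%N -> (a i < a j)%N) ->
  (forall m, HK (in_psalg y) m <-> exists i, a i = m) ->
  exists (sigma : 'S_n) (x z : 'I_n -> ps k),
    forall i : 'I_n,
      [/\ in_psalg y (x i), in_psalg y (z i),
          has_val (x i) (a i),
          in_polyalg x i (z i) /\ (val i = 0%N -> z i =1 psC 0)
        & y (sigma i) =1 psadd (x i) (z i)].
Proof.
move=> _ _ [hym [hgen _]] hainc hHK.
have hy0 : forall j, y j 0%N = 0 by move=> j; case: (hym j).
pose A := fun l : nat => if insub l is Some o then a o else 0%N.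
have hA : forall o : 'I_n, A o = a o by move=> o; rewrite /A valK.
pose Y := fun l : nat => if insub l is Some o then y o else (0 : PS k).
have hY : forall o : 'I_n, Y o = y o by move=> o; rewrite /Y valK.
have Ainc : forall l l', (l < l')%N -> (l' < n)%N -> (A l < A l')%N.
  move=> l l' hll' hl'; have hl : (l < n)%N := ltn_trans hll' hl'.
  have := hainc (Ordinal hl) (Ordinal hl') hll'.
  by rewrite -(hA (Ordinal hl)) -(hA (Ordinal hl')).
have HKA : forall m, HK (in_psalg y) m <-> exists l, (l < n)%N /\ A l = m.
  move=> m; rewrite hHK; split => [[o <-]|[l [hl <-]]].
    by exists o; split; [exact: ltn_ord | exact: hA].
  by exists (Ordinal hl); rewrite -(hA (Ordinal hl)).
have hYm : forall j, (j < n)%N -> mI y (Y j).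
  by move=> j hj; have := hym (Ordinal hj); rewrite -(hY (Ordinal hj)).
have gen : forall f, mI y f -> exists r : 'I_n -> PS k,
    (forall j, in_psalg y (r j)) /\ f = \sum_(j < n) r j * Y j.
  move=> f hf; have [r [hr hre]] := hgen f hf; exists r; split => //.
  have -> : \sum_(j < n) (r j : PS k) * Y j = \sum_(j < n) (r j : PS k) * y j.
    by apply: eq_bigr => j _; rewrite hY.
  by apply: funext => m; rewrite hre.
have [tau [x [z H]]] := build hy0 Ainc HKA hYm gen (leqnn n).
pose tf := fun o : 'I_n => insubd o (tau o) : 'I_n.
have htf : forall o, val (tf o) = tau o.
  by move=> o; rewrite val_insubd; case: (H o (ltn_ord o)) => ->.
have tf_inj : injective tf.
  move=> o1 o2 e; apply: val_inj; have := congr1 val e; rewrite !htf => e'.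
  by case: (H o2 (ltn_ord o2)) => _ hinj _ _ _; exact: (hinj o1 (ltn_ord o1) e').
exists (perm tf_inj), (fun o => x o), (fun o => z o).
move=> o; have [htl _ [[hxR hx0] hxv] [hzp hz0] hYe] := H o (ltn_ord o).
split.
- exact: hxR.
- apply: (Pol_R hy0) hzp => l hl.
  by have [_ _ [[]]] := H l (ltn_trans hl (ltn_ord o)).
- by rewrite -hA.
- split; first exact: Pol_poly (ltnW (ltn_ord o)) hzp.
  move=> ho0; move: hzp hz0; rewrite /= ho0 => hzp hz0.
  have [c hc] := Pol_0 hzp.
  move: hz0; rewrite hc coefC0 => hc0; by rewrite hc0.
- by move=> m; rewrite permE -hY htf hYe.
Qed.
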